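(* The function $\Xi(b)=\cos^2b\int_b^{-b}\frac{d\varphi}{\cos\varphi\sqrt{\cos^4\varphi-\cos^4b}}$ is continuous and increasing on $(-\pi/2,0)$, and $\lim_{b\to0-}\Xi(b)=\frac{\sqrt2}{2}\pi$. *)

(* Defs.v *)
From Stdlib Require Import Reals.
Open Scope R_scope.

(* Improper Riemann integral over the open interval (a,b):
   f is Riemann integrable on every compact [c,d] with a < c <= d < b, and
   int_c^d f -> l as c -> a+ and d -> b-. *)
Definition improper_integral (f : R -> R) (a b l : R) : Prop :=
  (forall c d, a < c -> c <= d -> d < b -> exists _ : Riemann_integrable f c d, True) /\
  (forall eps, eps > 0 -> exists delta, delta > 0 /\
     forall c d (pr : Riemann_integrable f c d),
       a < c -> c < a + delta -> b - delta < d -> d < b -> c <= d ->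
       Rabs (RiemannInt pr - l) < eps).

Definition Xi_integrand (b : R) (phi : R) : R :=
  1 / (cos phi * sqrt (cos phi ^ 4 - cos b ^ 4)).

Definition in_domain (b : R) : Prop := - (PI / 2) < b < 0.

(* Main.v *)
Require Import Defs.
From Stdlib Require Import Reals Lra.
From Coquelicot Require Import Coquelicot.
Open Scope R_scope.
Definition gfun (r x : R) := (1 + r * x) / (2 + r + r * x).
Definition kf (r t : R) : R := sqrt (gfun r (sin t ^ 2)).
Definition F (r : R) := RInt (kf r) (-(PI/2)) (PI/2).
Definition XiF (b : R) := F (tan b ^ 2).

Lemma sin2_le1 t : 0 <= sin t ^ 2 <= 1.
Proof. pose proof (sin2_cos2 t). unfold Rsqr in H. nra. Qed.

Lemma gfun_pos r x : 0 <= r -> 0 <= x -> 0 < gfun r x.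
Proof.
  intros. unfold gfun. apply Rdiv_lt_0_compat; nra.
Qed.

Lemma gfun_le1 r x : 0 <= r -> 0 <= x <= 1 -> gfun r x <= 1.
Proof.
  intros. unfold gfun. apply Rle_div_l; nra.
Qed.

Lemma kf_cont r t : 0 <= r -> continuous (kf r) t.
Proof.
  intros Hr. apply (ex_derive_continuous (kf r)). unfold kf, gfun. auto_derive.
  pose proof (sin2_le1 t). split. nra. split; [|exact I].
  apply Rmult_lt_0_compat. nra. apply Rinv_0_lt_compat. nra.
Qed.

Lemma kf_bound r t : 0 <= r -> 0 <= kf r t <= 1.
Proof.
  intros Hr. unfold kf. split. apply sqrt_pos.
  rewrite <- sqrt_1. apply sqrt_le_1. left; apply gfun_pos; auto; apply sin2_le1.
  lra. apply gfun_le1; auto; apply sin2_le1.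
Qed.

Lemma kf_ex r a b : 0 <= r -> ex_RInt (kf r) a b.
Proof. intros. apply (ex_RInt_continuous (V:=R_CompleteNormedModule)). intros. apply kf_cont; auto. Qed.

Lemma gfun_diff r1 r2 x : 0 <= r1 -> 0 <= r2 -> 0 <= x ->
  gfun r1 x - gfun r2 x = (r1 - r2) * ((x - 1) / ((2 + r1 + r1 * x) * (2 + r2 + r2 * x))).
Proof. intros. unfold gfun. field. split; nra. Qed.

Lemma gfun_lip r1 r2 x : 0 <= r1 -> 0 <= r2 -> 0 <= x <= 1 ->
  Rabs (gfun r1 x - gfun r2 x) <= Rabs (r1 - r2).
Proof.
  intros. rewrite gfun_diff by lra. rewrite Rabs_mult.
  rewrite <- (Rmult_1_r (Rabs (r1 - r2))) at 2.
  apply Rmult_le_compat_l. apply Rabs_pos.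
  set (D := (2 + r1 + r1 * x) * (2 + r2 + r2 * x)).
  assert (HD : 4 <= D).
  { unfold D. assert (2 <= 2 + r1 + r1 * x) by nra. assert (2 <= 2 + r2 + r2 * x) by nra. nra. }
  assert (Hi : D * / D = 1) by (field; lra).
  assert (Hp : 0 < / D) by (apply Rinv_0_lt_compat; lra).
  assert (Hq : / D <= 1) by nra.
  assert (Hx : 0 <= x * / D) by (apply Rmult_le_pos; lra).
  assert (Hx2 : x * / D <= / D) by nra.
  unfold Rdiv. apply Rabs_le. split; nra.
Qed.

Lemma sqrt_diff a b : 0 <= a -> 0 <= b -> Rabs (sqrt a - sqrt b) <= sqrt (Rabs (a - b)).
Proof.
  intros Ha Hb.
  assert (Hgen : forall a b, 0 <= b -> b <= a -> sqrt a - sqrt b <= sqrt (a - b)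
                  /\ 0 <= sqrt a - sqrt b).
  { intros x y Hy Hyx.
    assert (Hs : sqrt y <= sqrt x) by (apply sqrt_le_1; lra).
    pose proof (sqrt_sqrt x ltac:(lra)). pose proof (sqrt_sqrt y Hy).
    pose proof (sqrt_pos y).
    split; [|lra].
    rewrite <- (sqrt_pow2 (sqrt x - sqrt y)) by lra.
    apply sqrt_le_1. nra. lra. nra. }
  destruct (Rle_dec b a).
  - rewrite Rabs_pos_eq by (destruct (Hgen a b); lra).
    rewrite (Rabs_pos_eq (a - b)) by lra. apply Hgen; lra.
  - rewrite Rabs_left1 by (destruct (Hgen b a); lra).
    rewrite (Rabs_left1 (a - b)) by lra.
    replace (- (sqrt a - sqrt b)) with (sqrt b - sqrt a) by ring.
    replace (- (a - b)) with (b - a) by ring. apply Hgen; lra.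
Qed.

Lemma F_holder r1 r2 : 0 <= r1 -> 0 <= r2 ->
  Rabs (F r1 - F r2) <= PI * sqrt (Rabs (r1 - r2)).
Proof.
  intros H1 H2. unfold F.
  assert (E : RInt (kf r1) (-(PI/2)) (PI/2) - RInt (kf r2) (-(PI/2)) (PI/2)
    = RInt (fun t => kf r1 t - kf r2 t) (-(PI/2)) (PI/2)).
  { rewrite (RInt_minus (kf r1) (kf r2)) by (apply kf_ex; auto). reflexivity. }
  rewrite E.
  replace (PI * sqrt (Rabs (r1 - r2))) with ((PI/2 - - (PI/2)) * sqrt (Rabs (r1 - r2))) by field.
  apply abs_RInt_le_const.
  - pose proof PI_RGT_0; lra.
  - apply (ex_RInt_minus (kf r1) (kf r2)); apply kf_ex; auto.
  - intros t _. unfold kf.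
    eapply Rle_trans. apply sqrt_diff; left; apply gfun_pos; auto; apply sin2_le1.
    apply sqrt_le_1. apply Rabs_pos. apply Rabs_pos. apply gfun_lip; auto. apply sin2_le1.
Qed.

Lemma sin2_lt1 t : - (PI/2) < t < PI/2 -> sin t ^ 2 < 1.
Proof.
  intros [H1 H2]. pose proof (cos_gt_0 t H1 H2). pose proof (sin2_cos2 t).
  unfold Rsqr in H0. nra.
Qed.

Lemma F_strict r1 r2 : 0 <= r2 -> r2 < r1 -> F r1 < F r2.
Proof.
  intros H2 H12. unfold F. pose proof PI_RGT_0.
  apply RInt_lt.
  - lra.
  - intros. apply kf_cont; lra.
  - intros. apply kf_cont; lra.
  - intros t Ht. unfold kf.
    pose proof (sin2_lt1 t Ht). pose proof (sin2_le1 t).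
    apply sqrt_lt_1. left; apply gfun_pos; lra. left; apply gfun_pos; lra.
    assert (gfun r1 (sin t ^ 2) - gfun r2 (sin t ^ 2) < 0); [|lra].
    rewrite gfun_diff by lra.
    set (x := sin t ^ 2) in *.
    assert (0 < (2 + r1 + r1 * x) * (2 + r2 + r2 * x)) by (apply Rmult_lt_0_compat; nra).
    assert ((x - 1) / ((2 + r1 + r1 * x) * (2 + r2 + r2 * x)) < 0).
    { unfold Rdiv. apply Rmult_neg_pos. lra. apply Rinv_0_lt_compat; lra. }
    nra.
Qed.

Lemma F0 : F 0 = sqrt 2 / 2 * PI.
Proof.
  unfold F.
  rewrite (RInt_ext _ (fun _ => sqrt 2 / 2)).
  - rewrite RInt_const. unfold scal; simpl. unfold mult; simpl. field.
  - intros t _. unfold kf. apply sqrt_lem_1.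
    left; apply gfun_pos; [lra|apply sin2_le1]. pose proof (sqrt_pos 2); lra.
    pose proof (sqrt_sqrt 2 ltac:(lra)). unfold gfun.
    replace (sqrt 2 / 2 * (sqrt 2 / 2)) with (sqrt 2 * sqrt 2 / 4) by field.
    rewrite H. field.
Qed.

Lemma tan2_cont b0 : cos b0 <> 0 -> continuity_pt (fun x => tan x ^ 2) b0.
Proof.
  intros Hc. apply continuity_pt_filterlim.
  apply (ex_derive_continuous (fun x => tan x ^ 2)). unfold tan. auto_derive. auto.
Qed.

Lemma XiF_cont b0 : cos b0 <> 0 -> forall eps, 0 < eps -> exists del, 0 < del /\
  forall x, Rabs (x - b0) < del -> Rabs (XiF x - XiF b0) < eps.
Proof.
  intros Hc eps He. pose proof PI_RGT_0.
  pose proof (tan2_cont b0 Hc) as Ht.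
  unfold continuity_pt, continue_in, limit1_in, limit_in in Ht. simpl in Ht.
  unfold R_dist in Ht.
  destruct (Ht ((eps/PI)^2)) as [del [Hd Hdel]].
  { apply pow_lt. apply Rdiv_lt_0_compat; lra. }
  exists del. split; auto. intros x Hx.
  destruct (Req_dec x b0) as [->|Hne].
  { rewrite Rminus_diag, Rabs_R0. auto. }
  assert (Hl : Rabs (tan x ^ 2 - tan b0 ^ 2) < (eps/PI)^2).
  { apply Hdel. split; auto. unfold D_x, no_cond. split; auto. }
  unfold XiF. eapply Rle_lt_trans. apply F_holder; apply pow2_ge_0.
  assert (sqrt (Rabs (tan x ^ 2 - tan b0 ^ 2)) < eps / PI).
  { rewrite <- (sqrt_pow2 (eps/PI)). apply sqrt_lt_1. apply Rabs_pos.
    apply pow2_ge_0. auto. left; apply Rdiv_lt_0_compat; lra. }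
  apply (Rmult_lt_compat_l PI) in H0; auto.
  replace (PI * (eps / PI)) with eps in H0 by (field; lra). auto.
Qed.
Lemma tanb_neg b : in_domain b -> tan b < 0.
Proof. intros [H1 H2]. rewrite <- tan_0. apply tan_increasing; pose proof PI_RGT_0; lra. Qed.

Lemma cosb_pos b : in_domain b -> 0 < cos b.
Proof. intros [H1 H2]. apply cos_gt_0; pose proof PI_RGT_0; lra. Qed.

Lemma cos2_tan2 b : cos b <> 0 -> cos b ^ 2 * (1 + tan b ^ 2) = 1.
Proof. intros. unfold tan. pose proof (sin2_cos2 b). unfold Rsqr in H0. field_simplify; auto. lra. Qed.

Lemma cos_lt_in b phi : in_domain b -> b < phi < - b -> cos b < cos phi.
Proof.
  intros [H1 H2] [H3 H4]. pose proof PI_RGT_0.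
  destruct (Rle_dec 0 phi).
  - rewrite <- cos_neg. apply cos_decreasing_1; lra.
  - rewrite <- (cos_neg phi), <- (cos_neg b). apply cos_decreasing_1; lra.
Qed.

Lemma f_cont b phi : in_domain b -> b < phi < - b -> continuous (Xi_integrand b) phi.
Proof.
  intros Hb Hp. pose proof (cos_lt_in b phi Hb Hp). pose proof (cosb_pos b Hb).
  apply (ex_derive_continuous (Xi_integrand b)). unfold Xi_integrand. auto_derive.
  assert (Hc : cos b * cos b < cos phi * cos phi) by nra.
  assert (Ha : 0 < cos phi * (cos phi * (cos phi * (cos phi * 1))) +
     - (cos b * (cos b * (cos b * (cos b * 1))))) by nra.
  split; auto. split; auto.
  apply Rmult_integral_contrapositive. split. lra.
  apply Rgt_not_eq. apply sqrt_lt_R0. auto.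
Qed.

Definition gg (S t : R) := atan (S * sin t).
Definition dgg (S t : R) := / (1 + (S * sin t) ^ 2) * (S * cos t).

Lemma gg_deriv S t : is_derive (gg S) t (dgg S t).
Proof.
  assert (Hin : is_derive (fun t => S * sin t) t (S * cos t)) by (auto_derive; auto; ring).
  pose proof (is_derive_comp atan (fun t => S * sin t) t _ _
     (proj2 (is_derive_Reals _ _ _) (derivable_pt_lim_atan _)) Hin) as H.
  unfold gg, dgg. unfold scal in H; simpl in H; unfold mult in H; simpl in H.
  replace (/ (1 + (S * sin t) ^ 2) * (S * cos t)) with (S * cos t * / (1 + (S * sin t) ^ 2)) by ring.
  exact H.
Qed.

Lemma dgg_cont S t : continuous (dgg S) t.
Proof.
  apply (ex_derive_continuous (dgg S)). unfold dgg. auto_derive.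
  nra.
Qed.

Lemma key b t : in_domain b -> -(PI/2) < t < PI/2 ->
  dgg (- tan b) t * Xi_integrand b (gg (- tan b) t) = (1 + tan b ^ 2) * kf (tan b ^ 2) t.
Proof.
  intros Hb Ht.
  pose proof (tanb_neg b Hb). pose proof (cosb_pos b Hb).
  assert (Hcb : cos b ^ 2 * (1 + tan b ^ 2) = 1) by (apply cos2_tan2; lra).
  set (S := - tan b) in *.
  assert (HS : 0 < S) by (unfold S; lra).
  assert (HT : tan b ^ 2 = S ^ 2) by (unfold S; ring).
  rewrite HT in *.
  assert (Hcb2 : cos b ^ 2 = 1 / (1 + S ^ 2)).
  { apply (Rmult_eq_reg_r (1 + S^2)); [rewrite Hcb; field; nra | nra]. }
  pose proof (sin2_lt1 t Ht) as Hs1. pose proof (sin2_le1 t) as Hs0.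
  pose proof (cos_gt_0 t (proj1 Ht) (proj2 Ht)) as Hc.
  pose proof (sin2_cos2 t) as Hsc. unfold Rsqr in Hsc.
  unfold gg, kf, Xi_integrand.
  set (s := sin t) in *. set (c := cos t) in *.
  set (y := S * s).
  rewrite cos_atan. unfold Rsqr.
  assert (Hy : y ^ 2 < S ^ 2).
  { unfold y. replace ((S * s) ^ 2) with (S ^ 2 * s ^ 2) by ring.
    assert (0 < S ^ 2) by nra. nra. }
  assert (Hq0 : 0 < sqrt (1 + y * y)) by (apply sqrt_lt_R0; nra).
  pose proof (sqrt_sqrt (1 + y * y) ltac:(nra)) as Hq.
  set (q := sqrt (1 + y * y)) in *.
  set (A := (1 / q) ^ 4 - cos b ^ 4).
  assert (HA : A = (1 / (1 + y ^ 2)) ^ 2 - (1 / (1 + S ^ 2)) ^ 2).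
  { unfold A. rewrite <- Hcb2.
    replace ((1/q)^4) with ((1 / (q * q)) ^ 2) by (field; lra). rewrite Hq. field. nra. }
  assert (HA0 : 0 < A).
  { rewrite HA. assert (1 / (1 + S ^ 2) < 1 / (1 + y ^ 2)).
    { apply Rmult_lt_reg_r with ((1 + S^2) * (1 + y^2)). nra.
      field_simplify; nra. }
    assert (0 < 1 / (1 + S ^ 2)) by (apply Rdiv_lt_0_compat; nra). nra. }
  pose proof (sqrt_sqrt A ltac:(lra)) as HsA.
  assert (HsA0 : 0 < sqrt A) by (apply sqrt_lt_R0; auto).
  set (sA := sqrt A) in *.
  assert (Hg : 0 < gfun (S ^ 2) (s ^ 2)) by (apply gfun_pos; nra).
  pose proof (sqrt_sqrt _ (Rlt_le _ _ Hg)) as Hsg.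
  pose proof (sqrt_pos (gfun (S ^ 2) (s ^ 2))) as Hsg0.
  set (sg := sqrt (gfun (S ^ 2) (s ^ 2))) in *.
  apply Rsqr_inj.
  - unfold dgg. fold s c y. apply Rmult_le_pos. apply Rmult_le_pos.
    left; apply Rinv_0_lt_compat; nra. nra.
    left. apply Rdiv_lt_0_compat. lra. apply Rmult_lt_0_compat; auto.
    apply Rdiv_lt_0_compat; lra.
  - nra.
  - unfold Rsqr, dgg. fold s c y.
    replace (/ (1 + y ^ 2) * (S * c) * (1 / (1 / q * sA)) *
      (/ (1 + y ^ 2) * (S * c) * (1 / (1 / q * sA))))
      with (S ^ 2 * (c * c) * (q * q) / ((1 + y ^ 2) ^ 2 * (sA * sA)))
      by (field; split; [lra|split; [lra|nra]]).
    rewrite Hq, HsA, HA.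
    replace ((1 + S ^ 2) * sg * ((1 + S ^ 2) * sg)) with ((1 + S ^ 2) ^ 2 * (sg * sg)) by ring.
    rewrite Hsg. unfold gfun, y.
    replace (c * c) with (1 - s * s) by lra.
    field.
    unfold y in Hy. assert (0 <= (S * s) ^ 2) by nra.
    split; [nra | split; [nra | split; [nra | nra]]].
Qed.

Lemma tan_range b c : in_domain b -> b < c < -b -> -1 < tan c / (- tan b) < 1.
Proof.
  intros Hb Hc. pose proof (tanb_neg b Hb). destruct Hb as [H1 H2]. pose proof PI_RGT_0.
  assert (Ha : tan b < tan c) by (apply tan_increasing; lra).
  assert (Hb' : tan c < tan (- b)) by (apply tan_increasing; lra).
  rewrite tan_neg in Hb'.
  assert (Hi : (- tan b) * / (- tan b) = 1) by (field; lra).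
  assert (0 < / (- tan b)) by (apply Rinv_0_lt_compat; lra).
  unfold Rdiv. split; nra.
Qed.

Definition th b c := asin (tan c / (- tan b)).

Lemma th_range b c : in_domain b -> b < c < -b -> -(PI/2) < th b c < PI/2.
Proof. intros. apply asin_bound_lt. apply tan_range; auto. Qed.

Lemma gg_th b c : in_domain b -> b < c < -b -> gg (- tan b) (th b c) = c.
Proof.
  intros Hb Hc. pose proof (tan_range b c Hb Hc). pose proof (tanb_neg b Hb).
  unfold gg, th. rewrite sin_asin by lra.
  replace (- tan b * (tan c / - tan b)) with (tan c) by (field; lra).
  apply atan_tan. destruct Hb. pose proof PI_RGT_0. lra.
Qed.

Lemma gg_range b x : in_domain b -> -(PI/2) < x < PI/2 -> b < gg (- tan b) x < -b.
Proof.
  intros Hb Hx. pose proof (tanb_neg b Hb). pose proof (sin2_lt1 x Hx).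
  assert (-1 < sin x < 1) by nra.
  destruct Hb as [Hb1 Hb2]. pose proof PI_RGT_0.
  assert (E1 : atan (tan b) = b) by (apply atan_tan; lra).
  assert (E2 : atan (tan (- b)) = - b) by (apply atan_tan; lra).
  rewrite tan_neg in E2.
  unfold gg. split.
  - rewrite <- E1 at 1. apply atan_increasing. nra.
  - rewrite <- E2. apply atan_increasing. nra.
Qed.

Lemma RInt_f b c d : in_domain b -> b < c -> c <= d -> d < -b ->
  RInt (Xi_integrand b) c d = (1 + tan b ^ 2) * RInt (kf (tan b ^ 2)) (th b c) (th b d).
Proof.
  intros Hb H1 H2 H3.
  assert (Hc : b < c < -b) by lra. assert (Hd : b < d < -b) by lra.
  pose proof (th_range b c Hb Hc). pose proof (th_range b d Hb Hd).
  assert (Hin : forall x, Rmin (th b c) (th b d) <= x <= Rmax (th b c) (th b d) ->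
                 -(PI/2) < x < PI/2).
  { intros x Hx. pose proof (Rmin_glb_lt _ _ (-(PI/2)) (proj1 H) (proj1 H0)).
    pose proof (Rmax_lub_lt _ _ (PI/2) (proj2 H) (proj2 H0)). lra. }
  assert (E := RInt_comp (Xi_integrand b) (gg (- tan b)) (dgg (- tan b)) (th b c) (th b d)).
  rewrite (gg_th b c Hb Hc), (gg_th b d Hb Hd) in E.
  rewrite <- E.
  - rewrite (RInt_ext _ (fun y => scal (1 + tan b ^ 2) (kf (tan b ^ 2) y))).
    + exact (RInt_scal (kf (tan b ^ 2)) _ _ (1 + tan b ^ 2) (kf_ex _ _ _ (pow2_ge_0 _))).
    + intros x Hx. unfold scal; simpl; unfold mult; simpl. apply key; auto.
      apply Hin; lra.
  - intros x Hx. apply f_cont; auto. apply gg_range; auto.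
  - intros x Hx. split. apply gg_deriv. apply dgg_cont.
Qed.

Lemma cont_eps f x0 : continuity_pt f x0 -> forall eps, 0 < eps -> exists del, 0 < del /\
  forall x, Rabs (x - x0) < del -> Rabs (f x - f x0) < eps.
Proof.
  intros Hf eps He.
  unfold continuity_pt, continue_in, limit1_in, limit_in in Hf. simpl in Hf.
  unfold R_dist in Hf.
  destruct (Hf eps He) as [del [Hd Hdel]].
  exists del. split; auto. intros x Hx.
  destruct (Req_dec x x0) as [->|Hne].
  { rewrite Rminus_diag, Rabs_R0. auto. }
  apply Hdel. split; auto. unfold D_x, no_cond. split; auto.
Qed.

Lemma tan_cont b0 : cos b0 <> 0 -> continuity_pt tan b0.
Proof.
  intros Hc. apply continuity_pt_filterlim.
  apply (ex_derive_continuous tan). unfold tan. auto_derive. auto.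
Qed.

Lemma asin_mono y1 y2 : -1 <= y1 <= 1 -> -1 <= y2 <= 1 -> y1 <= y2 -> asin y1 <= asin y2.
Proof.
  intros H1 H2 H12. destruct (Rle_dec (asin y1) (asin y2)) as [|Hn]; auto.
  exfalso. pose proof (asin_bound y1). pose proof (asin_bound y2).
  assert (sin (asin y2) < sin (asin y1)) by (apply sin_increasing_1; lra).
  rewrite !sin_asin in H3 by auto. lra.
Qed.

Lemma improper b : in_domain b ->
  improper_integral (Xi_integrand b) b (-b) ((1 + tan b ^ 2) * F (tan b ^ 2)).
Proof.
  intros Hb. pose proof PI_RGT_0 as HPI. split.
  - intros c d Hc Hcd Hd.
    exists (@continuity_implies_RiemannInt _ _ _ Hcd
      (fun x Hx => proj2 (continuity_pt_filterlim _ _) (f_cont b x Hb ltac:(lra)))).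
    exact I.
  - intros eps He.
    pose proof (tanb_neg b Hb) as Htb. pose proof (cosb_pos b Hb) as Hcb.
    destruct Hb as [Hb1 Hb2].
    set (rho := tan b ^ 2).
    assert (Hrho : 0 <= rho) by apply pow2_ge_0.
    set (S := - tan b).
    assert (HS : 0 < S) by (unfold S; lra).
    set (K := 1 + rho).
    assert (HK : 0 < K) by (unfold K; lra).
    set (e := Rmin (eps / (4 * K)) (PI / 2)).
    assert (He0 : 0 < e) by (apply Rmin_glb_lt; [apply Rdiv_lt_0_compat; lra | lra]).
    assert (He1 : e <= eps / (4 * K)) by apply Rmin_l.
    assert (He2 : e <= PI / 2) by apply Rmin_r.
    set (t0 := - (PI / 2) + e).
    assert (Hm0 : sin (- (PI/2)) < sin t0) by (apply sin_increasing_1; unfold t0; lra).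
    rewrite sin_neg, sin_PI2 in Hm0.
    set (t1 := PI / 2 - e).
    assert (Hm1 : sin t1 < sin (PI/2)) by (apply sin_increasing_1; unfold t1; lra).
    rewrite sin_PI2 in Hm1.
    destruct (cont_eps tan b (tan_cont b ltac:(lra)) (S * (sin t0 + 1))) as [d1 [Hd1 Hdel1]].
    { apply Rmult_lt_0_compat; lra. }
    assert (Hcb' : cos (- b) <> 0) by (rewrite cos_neg; lra).
    destruct (cont_eps tan (-b) (tan_cont (-b) Hcb') (S * (1 - sin t1))) as [d2 [Hd2 Hdel2]].
    { apply Rmult_lt_0_compat; lra. }
    exists (Rmin d1 d2). split. apply Rmin_glb_lt; auto.
    intros c d pr Hc1 Hc2 Hd1' Hd2' Hcd.
    assert (Hmin1 := Rmin_l d1 d2). assert (Hmin2 := Rmin_r d1 d2).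
    assert (Hbin : in_domain b) by (split; auto).
    rewrite <- RInt_Reals. rewrite RInt_f by (auto; lra).
    fold rho K.
    assert (Hcc : b < c < - b) by lra. assert (Hdd : b < d < - b) by lra.
    pose proof (tan_range b c Hbin Hcc) as Hyc. pose proof (tan_range b d Hbin Hdd) as Hyd.
    pose proof (th_range b c Hbin Hcc) as Hthc. pose proof (th_range b d Hbin Hdd) as Hthd.
    assert (Hc : th b c <= t0).
    { unfold th. rewrite <- (asin_sin t0) by (unfold t0; lra).
      apply asin_mono. lra. pose proof (SIN_bound t0); lra.
      assert (Habs : Rabs (tan c - tan b) < S * (sin t0 + 1)) by (apply Hdel1; rewrite Rabs_pos_eq; lra).
      apply Rabs_def2 in Habs. fold S.
      assert (Hi : S * / S = 1) by (field; lra).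
      assert (0 < / S) by (apply Rinv_0_lt_compat; lra).
      unfold Rdiv. unfold S in *. nra. }
    assert (Hd : t1 <= th b d).
    { unfold th. rewrite <- (asin_sin t1) by (unfold t1; lra).
      apply asin_mono. pose proof (SIN_bound t1); lra. lra.
      assert (Habs : Rabs (tan d - tan (- b)) < S * (1 - sin t1)).
      { apply Hdel2. rewrite Rabs_left; lra. }
      rewrite tan_neg in Habs.
      apply Rabs_def2 in Habs. fold S.
      assert (Hi : S * / S = 1) by (field; lra).
      assert (0 < / S) by (apply Rinv_0_lt_compat; lra).
      unfold Rdiv. unfold S in *. nra. }
    set (k := kf rho).
    assert (Ch1 := RInt_Chasles k (- (PI/2)) (th b c) (PI/2) (kf_ex _ _ _ Hrho) (kf_ex _ _ _ Hrho)).
    assert (Ch2 := RInt_Chasles k (th b c) (th b d) (PI/2) (kf_ex _ _ _ Hrho) (kf_ex _ _ _ Hrho)).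
    unfold plus in Ch1, Ch2; simpl in Ch1, Ch2.
    assert (B1 : Rabs (RInt k (- (PI/2)) (th b c)) <= (th b c - - (PI/2)) * 1).
    { apply abs_RInt_le_const. lra. apply kf_ex; auto.
      intros t _. unfold k. pose proof (kf_bound rho t Hrho). rewrite Rabs_pos_eq; lra. }
    assert (B2 : Rabs (RInt k (th b d) (PI/2)) <= (PI/2 - th b d) * 1).
    { apply abs_RInt_le_const. lra. apply kf_ex; auto.
      intros t _. unfold k. pose proof (kf_bound rho t Hrho). rewrite Rabs_pos_eq; lra. }
    unfold F. fold k.
    rewrite <- Ch1, <- Ch2.
    replace (K * RInt k (th b c) (th b d) -
       K * (RInt k (- (PI / 2)) (th b c) + (RInt k (th b c) (th b d) + RInt k (th b d) (PI / 2))))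
      with (- (K * (RInt k (- (PI / 2)) (th b c) + RInt k (th b d) (PI / 2)))) by ring.
    rewrite Rabs_Ropp, Rabs_mult, (Rabs_pos_eq K) by lra.
    pose proof (Rabs_triang (RInt k (- (PI / 2)) (th b c)) (RInt k (th b d) (PI / 2))).
    assert (K * (2 * e) <= eps / 2).
    { replace (eps / 2) with (K * (2 * (eps / (4 * K)))) by (field; lra).
      apply Rmult_le_compat_l; lra. }
    unfold t0, t1 in *.
    apply Rle_lt_trans with (K * (2 * e)); [|lra].
    apply Rmult_le_compat_l; lra.
Qed.

Theorem proposition5 :
  exists Xi : R -> R,
    (forall b, in_domain b ->
       exists I, improper_integral (Xi_integrand b) b (- b) I /\
                 Xi b = cos b ^ 2 * I) /\
    (forall b, in_domain b -> continuity_pt Xi b) /\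
    (forall b1 b2, in_domain b1 -> in_domain b2 -> b1 < b2 -> Xi b1 < Xi b2) /\
    limit1_in Xi in_domain (sqrt 2 / 2 * PI) 0.
Proof.
  exists XiF. split; [|split; [|split]].
  - intros b Hb. exists ((1 + tan b ^ 2) * F (tan b ^ 2)). split.
    + apply improper; auto.
    + unfold XiF. rewrite <- Rmult_assoc, cos2_tan2, Rmult_1_l. reflexivity.
      pose proof (cosb_pos b Hb); lra.
  - intros b Hb. pose proof (cosb_pos b Hb).
    unfold continuity_pt, continue_in, limit1_in, limit_in. intros eps He.
    destruct (XiF_cont b ltac:(lra) eps He) as [del [Hd Hdel]].
    exists del. split; auto. intros x [_ Hx]. simpl in *. unfold R_dist in *. auto.
  - intros b1 b2 H1 H2 H12. unfold XiF. apply F_strict. apply pow2_ge_0.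
    pose proof (tanb_neg b2 H2).
    assert (tan b1 < tan b2).
    { destruct H1, H2. apply tan_increasing; lra. }
    nra.
  - unfold limit1_in, limit_in. intros eps He.
    destruct (XiF_cont 0 ltac:(rewrite cos_0; lra) eps He) as [del [Hd Hdel]].
    exists del. split; auto. intros x [_ Hx]. simpl in *. unfold R_dist in *.
    replace (sqrt 2 / 2 * PI) with (XiF 0). auto.
    unfold XiF. rewrite tan_0. replace (0 ^ 2) with 0 by ring. apply F0.
Qed.
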